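(* Let $M$ be a finite monoid. (i) If $M$ is almost R-trivial and the partial order $\mathbb{X}(M)$ is linear, then $M$ is Ramsey. (ii) If $\mathbb{X}(M)$ is not linear, then the sequence of pointed $M$-sets $X_n=\mathbb{X}(M)$ ($n\in\mathbb{N}$), with the canonical action of $M$ and with $1_MM=M$ as the distinguished point, does not have the Ramsey property. Consequently, if $M$ is almost R-trivial, then $M$ is Ramsey if and only if $\mathbb{X}(M)$ is linear.
   Context: $\mathbb{X}(M)=\{aM:a\in M\}$ ordered by inclusion, with canonical action $b\cdot aM=baM$. $M$ is almost R-trivial if for each $b\in M$ such that $b'M=bM$ for some $b'\neq b$, $ab=b$ for all $a\in M$. A pointed $M$-set is an $M$-set $X$ (identity acting trivially) with a distinguished point $x$ such that $Mx=X$. For a sequence $(X_n)$ of sets, $\langle(X_n)\rangle$ is the set of finite sequences $x_1\cdots x_k$ with $x_i\in X_{m_i}$ for some $m_1<\cdots<m_k$, a partial semigroup under concatenation (product of $x_1\cdots x_k$ and $y_1\cdots y_l$ defined iff there are $m_1<\dots<m_k<n_1<\dots<n_l$ with $x_i\in X_{m_i}$, $y_j\in X_{n_j}$); $M$ acts coordinatewise. A sequence $(w_i)$ in $\langle(X_n)\rangle$ is basic if $w_{i_1}\cdots w_{i_k}$ is defined for all $i_1<\cdots<i_k$. A sequence $(X_n)$ of pointed $M$-sets has the Ramsey property if for every finite coloring of $\langle(X_n)\rangle$ there is a basic sequence $(w_i)$ such that each $w_i$ has as an entry the distinguished element of the $X_n$ from which that entry comes, and all words $a_0(w_{i_0})\cdots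 a_l(w_{i_l})$ with $l\in\mathbb{N}$, $i_0<\cdots<i_l$, $a_0,\dots,a_l\in M$ and at least one $a_j=1_M$ receive the same color. $M$ is Ramsey if every sequence of pointed $M$-sets has the Ramsey property. *)

(* Defs.v *)
From mathcomp Require Import all_boot.
Set Implicit Arguments. Unset Strict Implicit. Unset Printing Implicit Defensive.

Record finMonoid := FinMonoid {
  mcar :> finType;
  mmul : mcar -> mcar -> mcar;
  mone : mcar;
  mmulA : associative mmul;
  mmul1 : left_id mone mmul;
  mmulr1 : right_id mone mmul }.

Section Defs.
Variable M : finMonoid.
Local Notation "a * b" := (mmul a b).
Local Notation "1" := (mone M).

Definition rideal (a : M) : {set M} := [set a * b | b in M].

Definition XM : {set {set M}} := [set rideal a | a in M].

Definition XM_linear : Prop :=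
  forall I J, I \in XM -> J \in XM -> (I \subset J) || (J \subset I).

Definition almost_R_trivial : Prop :=
  forall b : M, (exists b' : M, b' <> b /\ rideal b' = rideal b) ->
    forall a : M, a * b = b.

Definition is_pointed_Mset (X : Type) (act : M -> X -> X) (x0 : X) : Prop :=
  [/\ forall x, act 1 x = x,
      forall a b x, act a (act b x) = act (a * b) x
    & forall x, exists a, x = act a x0].

Section Words.
Variables (X : nat -> Type) (act : forall n, M -> X n -> X n)
          (pt : forall n, X n).

Definition letter := {n : nat & X n}.

(* elements of <(X_n)>: nonempty finite sequences whose letters come from
   strictly increasing indices *)
Definition is_word (w : seq letter) : Prop :=
  w <> [::] /\ sorted ltn (map (@projT1 _ _) w).

Definition act_word (a : M) (w : seq letter) : seq letter :=
  map (fun e => existT X (projT1 e) (act a (projT2 e))) w.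

Definition has_pt_entry (w : seq letter) : Prop :=
  exists n u v, w = u ++ existT X n (pt n) :: v.

(* basic sequence: w_{i_1} ... w_{i_k} defined for all i_1 < ... < i_k *)
Definition basic (w : nat -> seq letter) : Prop :=
  (forall i, is_word (w i)) /\
  forall s : seq nat, s <> [::] -> sorted ltn s -> is_word (flatten (map w s)).

Definition ramsey_prop : Prop :=
  forall (r : nat) (c : seq letter -> 'I_r),
  exists w : nat -> seq letter,
    [/\ basic w, forall i, has_pt_entry (w i) &
      exists col : 'I_r,
        forall s : seq (nat * M),
          s <> [::] -> sorted ltn (map fst s) ->
          (exists2 p, p \in s & p.2 = 1) ->
          c (flatten (map (fun p => act_word p.2 (w p.1)) s)) = col].

End Words.

Definition ramsey_monoid : Prop :=
  forall (X : nat -> Type) (act : forall n, M -> X n -> X n) (pt : forall n, X n),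
    (forall n, is_pointed_Mset (act n) (pt n)) -> ramsey_prop act pt.

Definition XM_t := {I : {set M} | I \in XM}.

Lemma XM_act_proof (b : M) (I : XM_t) : [set b * x | x in val I] \in XM.
Proof.
case: I => I /= /imsetP [a _ ->]; apply/imsetP; exists (b * a) => //.
apply/setP => y; apply/imsetP/imsetP.
- by case=> x /imsetP [z _ ->] ->; exists z => //; rewrite mmulA.
- by case=> z _ ->; exists (a * z); [apply/imsetP; exists z | rewrite mmulA].
Qed.

Definition XM_act (b : M) (I : XM_t) : XM_t := exist (fun J => J \in XM) _ (XM_act_proof b I).

Lemma XM_pt_proof : rideal 1 \in XM.
Proof. by apply/imsetP; exists 1. Qed.

Definition XM_pt : XM_t := exist (fun J => J \in XM) _ XM_pt_proof.

End Defs.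

(* Main.v *)
Require Import Defs.
From mathcomp Require Import all_boot.
From mathcomp Require Import boolp.
From mathcomp Require classical_sets filter.
Set Implicit Arguments. Unset Strict Implicit. Unset Printing Implicit Defensive.

Module UFM.
Import classical_sets filter.

Fixpoint lin {X : Type} (a : X) (s : seq X) : Prop :=
  if s is b :: s' then b = a \/ lin a s' else False.

Lemma lin_cat {X : Type} (a : X) s s' : lin a (s ++ s') <-> lin a s \/ lin a s'.
Proof. elim: s => [|b s IH] /=; [tauto| rewrite IH; tauto]. Qed.

Section UF.
Variable T : Type.

Definition is_ultra (F : (T -> Prop) -> Prop) : Prop :=
  [/\ F (fun _ => True), ~ F (fun _ => False),
      forall A B, F A -> F B -> F (fun x => A x /\ B x),
      forall A B : T -> Prop, (forall x, A x -> B x) -> F A -> F B &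
      forall A, F A \/ F (fun x => ~ A x)].

Record ultra := Ultra { ufs :> (T -> Prop) -> Prop; ufsP : is_ultra ufs }.

Implicit Types (u v w : ultra) (A B : T -> Prop).

Lemma ufT u : u (fun _ => True). Proof. by case: u => F /= []. Qed.
Lemma uf0 u : ~ u (fun _ => False). Proof. by case: u => F /= []. Qed.
Lemma ufI u A B : u A -> u B -> u (fun x => A x /\ B x). Proof. by case: u => F /= [_ _ hI _ _]; apply: hI. Qed.
Lemma ufS u A B : (forall x, A x -> B x) -> u A -> u B. Proof. by case: u => F /= [_ _ _ hS _]; apply: hS. Qed.
Lemma ufC u A : u A \/ u (fun x => ~ A x). Proof. by case: u => F /= []. Qed.

Lemma ufE u A B : (forall x, A x <-> B x) -> u A <-> u B.
Proof. by move=> h; split; apply: ufS => x /h. Qed.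

Lemma uf_ne u A : u A -> exists x, A x.
Proof.
move=> uA; apply: contrapT => nex; have := @uf0 u; apply.
by apply: ufS uA => x Ax; apply: nex; exists x.
Qed.

Lemma ufN u A : u (fun x => ~ A x) <-> ~ u A.
Proof.
split; last by case: (ufC u A).
move=> uNA uA; have /uf_ne [x []] := ufI uA uNA; by [].
Qed.

Lemma uf_ext u v : (forall A, u A -> v A) -> u = v.
Proof.
move=> h; have e : forall A, u A <-> v A.
  move=> A; split; first exact: h.
  move=> vA; case: (ufC u A) => // /h vNA.
  by have /uf_ne [x []] := ufI vA vNA.
case: u v h e => F FP [G GP] /= _ e.
have FG : F = G by apply: funext => A; apply: propext.
subst G; congr Ultra; exact: Prop_irrelevance.
Qed.

Lemma uf_and u A B : u (fun x => A x /\ B x) <-> u A /\ u B.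
Proof.
split; last by case; apply: ufI.
by move=> h; split; apply: ufS h => x [].
Qed.

Lemma uf_imp u A B : u A -> u (fun x => A x -> B x) -> u B.
Proof. by move=> uA uAB; apply: ufS (ufI uA uAB) => x [] a /(_ a). Qed.

Lemma principal_ultra (t : T) : is_ultra (fun A => A t).
Proof.
rewrite /is_ultra; split => //.
- by move=> A B /(_ t).
- by move=> A; case: (pselect (A t)); [left|right].
Qed.
Definition pu (t : T) := Ultra (principal_ultra t).

Lemma ultra_fip (Fam : (T -> Prop) -> Prop) :
  (forall s : seq (T -> Prop), (forall A, lin A s -> Fam A) ->
     exists x, forall A, lin A s -> A x) ->
  exists u : ultra, forall A, Fam A -> u A.
Proof.
move=> fip.
pose F : set_system T := fun A => exists s : seq (T -> Prop),
  (forall B, lin B s -> Fam B) /\ (forall x, (forall B, lin B s -> B x) -> A x).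
have FF : Filter F.
  split.
  - by exists [::]; split.
  - move=> A B [s [sF sA]] [s' [s'F s'B]]; exists (s ++ s'); split.
      by move=> C /lin_cat [] ?; [apply: sF|apply: s'F].
    move=> x hx; split; [apply: sA|apply: s'B] => C Cs; apply: hx;
      apply/lin_cat; by [left|right].
  - move=> A B AB [s [sF sA]]; exists s; split => // x /sA; exact: AB.
have PF : ProperFilter F.
  split => //; case=> s [sF s0]; have [x hx] := fip s sF; exact: (s0 x hx).
have [G [GU FG]] := ultraFilterLemma PF.
have Gu : is_ultra G.
  rewrite /is_ultra; split.
  - exact: filterT.
  - exact: filter_not_empty.
  - by move=> A B; apply: filterI.
  - by move=> A B AB; apply: filterS.
  - by move=> A; apply: in_ultra_setVsetC.
exists (Ultra Gu) => A FA /=; apply: FG; exists [:: A]; split.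
  by move=> B [<-|].
by move=> x /(_ A (or_introl erefl)).
Qed.

Definition closed (K : ultra -> Prop) :=
  forall v : ultra, (forall A, (forall u, K u -> u A) -> v A) -> K v.

Lemma closed_inter (I : Type) (K : I -> ultra -> Prop) :
  (forall i, closed (K i)) -> closed (fun u => forall i, K i u).
Proof. by move=> cK v hv i; apply: cK => A hA; apply: hv => u /(_ i) /hA. Qed.

Lemma closed_interC (C : (ultra -> Prop) -> Prop) :
  (forall K, C K -> closed K) -> closed (fun u => forall K, C K -> K u).
Proof. by move=> cK v hv K CK; apply: cK => // A hA; apply: hv => u /(_ K CK) /hA. Qed.

Lemma closedI (K1 K2 : ultra -> Prop) : closed K1 -> closed K2 -> closed (fun u => K1 u /\ K2 u).
Proof.
move=> c1 c2 v hv; split; [apply: c1|apply: c2] => A hA; apply: hv => u []; by [move=> /hA|move=> _ /hA].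
Qed.

Lemma closedT : closed (fun _ => True). Proof. by []. Qed.

Lemma closed_mem A : closed (fun u => u A). Proof. by move=> v; apply. Qed.

Definition contmap (phi : ultra -> ultra) (Phi : (T -> Prop) -> T -> Prop) :=
  forall x A, phi x A <-> x (Phi A).

Section Cont.
Variables (phi : ultra -> ultra) (Phi : (T -> Prop) -> T -> Prop).
Hypothesis cphi : contmap phi Phi.

Lemma Phi_pt A t : Phi A t <-> phi (pu t) A.
Proof. by rewrite cphi. Qed.

Lemma PhiN A t : Phi (fun x => ~ A x) t <-> ~ Phi A t.
Proof. by rewrite !Phi_pt ufN. Qed.

Lemma PhiI A B t : Phi (fun x => A x /\ B x) t <-> Phi A t /\ Phi B t.
Proof. by rewrite !Phi_pt uf_and. Qed.

Lemma closed_preim (K : ultra -> Prop) c : closed K -> closed (fun x => K x /\ phi x = c).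
Proof.
move=> cK v hv; split.
  by apply: cK => A hA; apply: hv => u [/hA].
apply: contrapT => ne.
have [A [cA vnA]] : exists A, c A /\ ~ phi v A.
  apply: contrapT => h; apply: ne; apply/esym/uf_ext => A cA.
  by apply: contrapT => nA; apply: h; exists A.
have vD : v (Phi (fun y => ~ A y)) by rewrite -cphi ufN.
have : ~ (forall u, K u /\ phi u = c -> u (fun t => ~ Phi (fun y => ~ A y) t)).
  move=> h; have := hv _ h; rewrite ufN; exact.
apply; move=> u [_ e]; rewrite ufN -cphi ufN e => h; exact: h cA.
Qed.

Lemma closed_fix (K : ultra -> Prop) : closed K -> closed (fun x => K x /\ phi x = x).
Proof.
move=> cK v hv; split.
  by apply: cK => A hA; apply: hv => u [/hA].
apply: contrapT => ne.
have [A [vA vnA]] : exists A, v A /\ ~ phi v A.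
  apply: contrapT => h; apply: ne; apply/uf_ext => A pA.
  apply: contrapT => nA; apply: h; exists (fun x => ~ A x); split; first by rewrite ufN.
  by rewrite ufN; apply.
have vD : v (fun t => A t /\ Phi (fun y => ~ A y) t).
  by apply: ufI => //; rewrite -cphi ufN.
have : ~ (forall u, K u /\ phi u = u -> u (fun t => ~ (A t /\ Phi (fun y => ~ A y) t))).
  move=> h; have := hv _ h; rewrite ufN; exact.
apply; move=> u [_ e]; rewrite ufN uf_and -cphi e ufN; tauto.
Qed.

Lemma closed_image (K : ultra -> Prop) : closed K -> closed (fun y => exists2 x, K x & phi x = y).
Proof.
move=> cK v hv.
pose Fam A := (forall u, K u -> u A) \/ exists2 B, v B & A = Phi B.
have : exists u : ultra, forall A, Fam A -> u A.
  apply: ultra_fip => s sF.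
  have [F [B [FK vB sub]]] : exists F B, [/\ (forall u, K u -> u F), v B &
      forall t, F t -> Phi B t -> forall A, lin A s -> A t].
    elim: s sF => [|A s IH] sF.
      by exists (fun _ => True), (fun _ => True); split => //; [move=> u _|]; exact: ufT.
    have [|F [B [FK vB sub]]] := IH; first by move=> C Cs; apply: sF; right.
    case: (sF A (or_introl erefl)) => [AK|[B' vB' ->]].
      exists (fun t => A t /\ F t), B; split => //.
        by move=> u Ku; apply: ufI; [apply: AK|apply: FK].
      by move=> t [At Ft] PB C [<-|Cs] //; apply: sub.
    exists F, (fun t => B t /\ B' t); split => //; first exact: ufI.
    move=> t Ft /PhiI [PB PB'] C [<-|Cs] //; exact: sub.
  apply: contrapT => nex.
  have sub' : forall t, F t -> Phi (fun x => ~ B x) t.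
    move=> t Ft; rewrite PhiN => PB; apply: nex; exists t; exact: sub.
  have : v (fun x => ~ B x).
    apply: hv => _ [u Ku <-]; rewrite cphi; apply: ufS (FK _ Ku); exact: sub'.
  by rewrite ufN.
case=> x hx; exists x.
  by apply: cK => A hA; apply: hx; left.
apply/esym/uf_ext => A vA; rewrite cphi; apply: hx; right; by exists A.
Qed.

End Cont.

Lemma chain_inter (C : (ultra -> Prop) -> Prop) :
  (forall K, C K -> closed K /\ exists u, K u) ->
  (forall K1 K2, C K1 -> C K2 -> (forall u, K1 u -> K2 u) \/ (forall u, K2 u -> K1 u)) ->
  (exists K, C K) -> exists v, forall K, C K -> K v.
Proof.
move=> hC tot [K0 CK0].
pose Fam A := exists2 K, C K & forall u, K u -> u A.
have [v hv] : exists u : ultra, forall A, Fam A -> u A.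
  apply: ultra_fip => s sF.
  have [K [CK hK]] : exists K, C K /\ forall A, lin A s -> forall u, K u -> u A.
    elim: s sF => [|A s IH] sF; first by exists K0.
    have [|K [CK hK]] := IH; first by move=> B Bs; apply: sF; right.
    have [K' CK' hK'] := sF A (or_introl erefl).
    case: (tot _ _ CK CK') => sub.
      exists K; split => // B [<-|Bs] u Ku; [apply: hK'; exact: sub | exact: hK].
    exists K'; split => // B [<-|Bs] u Ku; [exact: hK' | apply: hK => //; exact: sub].
  have [_ [u Ku]] := hC _ CK.
  have : u (fun t => forall A, lin A s -> A t).
    elim: s {sF} hK => [|A s IH] hK; first by apply: ufS (ufT u).
    apply: ufS (ufI (hK A (or_introl erefl) u Ku) (IH (fun B Bs => hK B (or_intror Bs))))
      => t [At h] B [<-|]; [exact: At|exact: h].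
  by move/uf_ne.
exists v => K CK; have [cK _] := hC _ CK; apply: cK => A hA; apply: hv; by exists K.
Qed.

Lemma zorn_min (P : (ultra -> Prop) -> Prop) (K0 : ultra -> Prop) :
  P K0 ->
  (forall K, P K -> closed K /\ exists u, K u) ->
  (forall C : (ultra -> Prop) -> Prop, (exists K, C K) -> (forall K, C K -> P K) ->
     (forall K1 K2, C K1 -> C K2 -> (forall u, K1 u -> K2 u) \/ (forall u, K2 u -> K1 u)) ->
     P (fun u => forall K, C K -> K u)) ->
  exists K, [/\ P K, (forall u, K u -> K0 u) &
     forall K', P K' -> (forall u, K' u -> K u) -> forall u, K u -> K' u].
Proof.
move=> PK0 hP hC.
pose Sp := fun K : ultra -> Prop => P K /\ forall u, K u -> K0 u.
pose S := {K : ultra -> Prop | Sp K}.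
pose R (a b : S) := `[< forall u, sval b u -> sval a u >].
have [[K [PK KK0]] Kmin] : exists t : S, forall s, R t s -> s = t.
  apply: Zorn.
  - by move=> t; apply/asboolP.
  - by move=> r s t /asboolP h1 /asboolP h2; apply/asboolP => u /h2 /h1.
  - move=> [a [Pa ha]] [b [Pb hb]] /asboolP h1 /asboolP h2.
    have e : a = b by apply: funext => u; apply: propext; split; [apply: h2|apply: h1].
    subst b; congr exist; exact: Prop_irrelevance.
  - move=> A Atot; case: (pselect (exists t, A t)) => [[t At]|nA]; last first.
      exists (exist Sp K0 (conj PK0 (fun u h => h))) => s As; exfalso; apply: nA; by exists s.
    pose C K := exists2 s : S, A s & sval s = K.
    have PC : P (fun u => forall K, C K -> K u).
      apply: hC.
      - by exists (sval t), t.
      - by move=> K [s _ <-]; case: (svalP s).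
      - move=> K1 K2 [s1 As1 <-] [s2 As2 <-].
        case: (Atot _ _ As1 As2) => /asboolP h; by [right|left].
    have sub : forall u, (forall K, C K -> K u) -> K0 u.
      move=> u /(_ (sval t)) h; apply: (proj2 (svalP t)); apply: h; by exists t.
    exists (exist Sp _ (conj PC sub)) => s As; apply/asboolP => u /= /(_ (sval s)); apply.
    by exists s.
exists K; split => // K' PK' sub u Ku.
have KK : forall u, K' u -> K0 u by move=> w /sub /KK0.
have := Kmin (exist Sp K' (conj PK' KK)).
have h : R (exist Sp K (conj PK KK0)) (exist Sp K' (conj PK' KK)) by apply/asboolP.
by move/(_ h) => [->].
Qed.

End UF.


Section Semi.
Variable T : Type.
Variable op : T -> T -> T.
Hypothesis opA : associative op.

Implicit Types (u v w : ultra T) (A B : T -> Prop).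

Lemma mul_ultra u v : is_ultra (fun A => u (fun x => v (fun y => A (op x y)))).
Proof.
rewrite /is_ultra; split.
- by apply: ufS (ufT u) => x _; apply: ufT.
- move=> h; have [x] := uf_ne h; exact: (@uf0 _ v).
- move=> A B hA hB; apply: ufS (ufI hA hB) => x [] h1 h2; exact: ufI.
- move=> A B AB h; apply: ufS h => x h; apply: ufS h => y; exact: AB.
- move=> A; case: (ufC u (fun x => v (fun y => A (op x y)))) => h; first by left.
  right; apply: ufS h => x; rewrite -ufN; exact.
Qed.

Definition mulU u v := Ultra (mul_ultra u v).

Lemma mulUE u v A : mulU u v A = u (fun x => v (fun y => A (op x y))).
Proof. by []. Qed.

Lemma mulUA : associative mulU.
Proof.
move=> u v w; apply: uf_ext => A; rewrite !mulUE => h.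
apply: ufS h => x /= h; apply: ufS h => y h; apply: ufS h => z; by rewrite opA.
Qed.

Lemma rho_cont v : contmap (fun x => mulU x v) (fun A x => v (fun y => A (op x y))).
Proof. by []. Qed.

Definition idem u := mulU u u = u.
Definition le u v := mulU u v = u /\ mulU v u = u.

Lemma le_trans u v w : le u v -> le v w -> le u w.
Proof.
move=> [h1 h2] [h3 h4]; split.
  by rewrite -h1 -mulUA h3.
by rewrite -h2 mulUA h4.
Qed.

Lemma le_refl u : idem u -> le u u. Proof. by move=> h; split. Qed.

Lemma le_anti u v : le u v -> le v u -> u = v.
Proof. by move=> [h1 h2] [h3 h4]; rewrite -h1 h4. Qed.

Definition subsemi (K : ultra T -> Prop) := forall x y, K x -> K y -> K (mulU x y).

Lemma ellis (K : ultra T -> Prop) : closed K -> (exists x, K x) -> subsemi K ->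
  exists e, K e /\ idem e.
Proof.
move=> cK neK sK.
pose P (L : ultra T -> Prop) := [/\ closed L, (exists x, L x) & subsemi L].
have [L [[cL [e Le] sL] LK Lmin]] : exists L, [/\ P L, (forall u, L u -> K u) &
     forall L', P L' -> (forall u, L' u -> L u) -> forall u, L u -> L' u].
  apply: (@zorn_min _ P K).
  - by split.
  - by move=> L [].
  - move=> C neC CP tot; split.
    + by apply: closed_interC => L CL; have [] := CP _ CL.
    + have [v hv] := chain_inter (fun L CL => match CP L CL with And3 a b _ => conj a b end) tot neC.
      by exists v => L CL; apply: hv.
    + by move=> x y hx hy L CL; have [_ _ sL] := CP _ CL; apply: sL; [apply: hx|apply: hy].
exists e; split; first exact: LK.
(* L e = L *)
pose Le' := fun y => exists2 x, L x & mulU x e = y.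
have PLe : P Le'.
  split.
  - exact: (closed_image (rho_cont e) cL).
  - by exists (mulU e e), e.
  - move=> _ _ [x Lx <-] [y Ly <-]; exists (mulU (mulU x e) y).
      exact: (sL _ _ (sL _ _ Lx Le) Ly).
    by rewrite !mulUA.
have LeL : forall u, Le' u -> L u by move=> _ [x Lx <-]; apply: sL.
have [x Lx xe] := Lmin _ PLe LeL _ Le.
pose B := fun y => L y /\ mulU y e = e.
have PB : P B.
  split.
  - exact: (closed_preim (rho_cont e) (c:=e) cL).
  - by exists x.
  - move=> a b [La ae] [Lb be]; split; first exact: sL.
    by rewrite -mulUA be ae.
have BL : forall u, B u -> L u by move=> u [].
by have [] := Lmin _ PB BL _ Le.
Qed.

Lemma min_idem (G : ultra T -> Prop) e : closed G -> subsemi G -> G e -> idem e ->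
  exists f, [/\ G f, idem f, le f e &
     forall h, G h -> idem h -> le h f -> h = f].
Proof.
move=> cG sG Ge ie.
pose P (L : ultra T -> Prop) := [/\ closed L, (exists x, L x),
   (forall u, L u -> G u) & forall x y, G x -> L y -> L (mulU x y)].
pose K0 := fun y => exists2 x, G x & mulU x e = y.
have PK0 : P K0.
  split.
  - exact: (closed_image (rho_cont e) cG).
  - by exists (mulU e e), e.
  - by move=> _ [x Gx <-]; apply: sG.
  - by move=> x _ Gx [y Gy <-]; exists (mulU x y); [apply: sG|rewrite mulUA].
have [L [[cL [l0 Ll0] LG Lid] LK0 Lmin]] : exists L, [/\ P L, (forall u, L u -> K0 u) &
     forall L', P L' -> (forall u, L' u -> L u) -> forall u, L u -> L' u].
  apply: (@zorn_min _ P K0) => //.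
  - by move=> L [].
  - move=> C neC CP tot; split.
    + by apply: closed_interC => L CL; have [] := CP _ CL.
    + have [v hv] := chain_inter (fun L CL => match CP L CL with And4 a b _ _ => conj a b end) tot neC.
      by exists v => L CL; apply: hv.
    + by move=> u hu; have [L CL] := neC; have [_ _ LG _] := CP _ CL; apply: LG; apply: hu.
    + by move=> x y Gx hy L CL; have [_ _ _ Li] := CP _ CL; apply: Li => //; apply: hy.
have [g [Lg ig]] : exists g, L g /\ idem g.
  apply: ellis => //; first by exists l0.
  by move=> x y Lx Ly; apply: Lid => //; apply: LG.
have [s Gs sg] := LK0 _ Lg.
have ge : mulU g e = g by rewrite -sg -mulUA ie.
exists (mulU e g); split.
- by apply: sG => //; apply: LG.
- by rewrite /idem mulUA -(mulUA e g e) ge -mulUA ig.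
- by split; [rewrite -mulUA ge | rewrite mulUA ie].
move=> h Gh ih [hf fh].
pose L' := fun y => exists2 x, G x & mulU x h = y.
have PL' : P L'.
  split.
  - exact: (closed_image (rho_cont h) cG).
  - by exists (mulU h h), h.
  - by move=> _ [x Gx <-]; apply: sG.
  - by move=> x _ Gx [y Gy <-]; exists (mulU x y); [apply: sG|rewrite mulUA].
have L'L : forall u, L' u -> L u.
  move=> _ [x Gx <-]; rewrite -hf mulUA; apply: (Lid); first by apply: sG.
  exact: (Lid _ _ Ge Lg).
have [y Gy yh] := Lmin _ PL' L'L _ (Lid _ _ Ge Lg).
by rewrite -fh -yh -mulUA ih.
Qed.

Section Image.
Variable f : T -> T.
Hypothesis fop : forall x y, f (op x y) = op (f x) (f y).

Lemma im_ultra u : is_ultra (fun A => u (fun x => A (f x))).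
Proof.
rewrite /is_ultra; split.
- exact: ufT.
- exact: uf0.
- by move=> A B; apply: ufI.
- by move=> A B AB; apply: ufS => x; apply: AB.
- by move=> A; apply: ufC.
Qed.

Definition imU u := Ultra (im_ultra u).
Lemma imUE u A : imU u A = u (fun x => A (f x)). Proof. by []. Qed.

Lemma im_cont : contmap imU (fun A x => A (f x)). Proof. by []. Qed.

Lemma imUM u v : imU (mulU u v) = mulU (imU u) (imU v).
Proof. by apply: uf_ext => A; rewrite imUE !mulUE; apply: ufS => x; apply: ufS => y; rewrite fop. Qed.

Lemma imU_idem u : idem u -> idem (imU u).
Proof. by rewrite /idem -imUM => ->. Qed.

Lemma imU_le u v : le u v -> le (imU u) (imU v).
Proof. by case=> h1 h2; split; rewrite -imUM ?h1 ?h2. Qed.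

Lemma imU_fix u (D : T -> Prop) : (forall x, D x -> f x = x) -> u D -> imU u = u.
Proof.
move=> fD uD; apply/esym/uf_ext => A uA; rewrite imUE; apply: ufS (ufI uA uD) => x [Ax Dx].
by rewrite fD.
Qed.

End Image.

Lemma imU_comp (f g : T -> T) u : imU f (imU g u) = imU (fun x => f (g x)) u.
Proof. by apply: uf_ext. Qed.

Lemma imU_id (f : T -> T) u : (forall x, f x = x) -> imU f u = u.
Proof. by move=> h; apply: uf_ext => A; rewrite imUE; apply: ufS => x; rewrite h. Qed.

End Semi.

End UFM.
Import UFM.

Section Mon.
Variable M : finMonoid.
Local Notation "a * b" := (mmul a b).
Local Notation "1" := (mone M).

Lemma ridealP (a b : M) : reflect (exists y, b = a * y) (b \in rideal a).
Proof. by apply: (iffP imsetP) => [[y _ ->]|[y ->]]; exists y. Qed.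

Lemma rideal_self (a : M) : a \in rideal a.
Proof. by apply/ridealP; exists 1; rewrite mmulr1. Qed.

Lemma rideal_sub (a b : M) : b \in rideal a -> rideal b \subset rideal a.
Proof.
move=> /ridealP [y ->]; apply/subsetP => z /ridealP [w ->]; apply/ridealP.
by exists (y * w); rewrite mmulA.
Qed.

Lemma rideal_subE (a b : M) : (rideal b \subset rideal a) = (b \in rideal a).
Proof.
apply/idP/idP; last exact: rideal_sub.
by move/subsetP; apply; apply: rideal_self.
Qed.

Lemma rideal_mulr (a y : M) : rideal (a * y) \subset rideal a.
Proof. by rewrite rideal_subE; apply/ridealP; exists y. Qed.

Lemma rideal_mull (m n : M) : rideal (m * n) = [set m * x | x in rideal n].
Proof.
apply/setP => z; apply/ridealP/imsetP => [[y ->]|[x /ridealP [y ->] ->]].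
  by exists (n * y); [apply/ridealP; exists y | rewrite mmulA].
by exists y; rewrite mmulA.
Qed.

Lemma XM_in (a : M) : rideal a \in XM M.
Proof. by apply/imsetP; exists a. Qed.

Hypothesis HL : XM_linear M.

Lemma chain (a b : M) : (rideal a \subset rideal b) || (rideal b \subset rideal a).
Proof. exact: HL (XM_in a) (XM_in b). Qed.

Lemma rideal_mul_sub (m n : M) : rideal (m * n) \subset rideal n.
Proof.
case/orP: (chain (m * n) n) => // sub.
have e : rideal n = rideal (m * n).
  apply/eqP; rewrite eqEcard sub /= rideal_mull; exact: leq_imset_card.
by rewrite -e.
Qed.

Lemma card_le_sub (a b : M) : #|rideal a| <= #|rideal b| -> rideal a \subset rideal b.
Proof.
move=> le; case/orP: (chain a b) => // sub.
have e : rideal b = rideal a by apply/eqP; rewrite eqEcard sub.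
by rewrite e.
Qed.

Lemma card_eq (a b : M) : #|rideal a| = #|rideal b| -> rideal a = rideal b.
Proof.
move=> e; apply/eqP; rewrite eqEsubset !card_le_sub // e //.
Qed.

Lemma card_lt_sub (a b : M) : #|rideal a| < #|rideal b| -> rideal a \subset rideal b.
Proof. by move/ltnW/card_le_sub. Qed.

Hypothesis HR : almost_R_trivial M.

Lemma fixR (m a : M) : rideal (m * a) = rideal a -> m * a = a.
Proof.
move=> e; case: (eqVneq (m * a) a) => // ne.
by apply: (@HR a _ m); exists (m * a); split => //; apply/eqP.
Qed.

Lemma fixR_sub (m a x : M) : rideal (m * a) = rideal a -> x \in rideal a -> m * x = x.
Proof. by move=> /fixR e /ridealP [y ->]; rewrite mmulA e. Qed.

Lemma rzero (a a' : M) : a' != a -> rideal a' = rideal a -> forall x, x * a = a.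
Proof. by move=> ne e x; apply: (@HR a _ x); exists a'; split => //; apply/eqP. Qed.

End Mon.


Section Key.
Variable M : finMonoid.
Local Notation "a * b" := (mmul a b).
Local Notation "1" := (mone M).

Definition wordT := seq (nat * M).
Notation uT := (ultra wordT).
Implicit Types (u v w : uT).

Definition actT (m : M) (x : wordT) : wordT := map (fun p => (p.1, m * p.2)) x.

Notation "u ** v" := (mulU (@cat _) u v) (at level 40, left associativity).
Definition act (m : M) (u : uT) : uT := imU (actT m) u.

Lemma actT_cat m x y : actT m (x ++ y) = actT m x ++ actT m y.
Proof. exact: map_cat. Qed.

Lemma actT_comp a b x : actT a (actT b x) = actT (a * b) x.
Proof. by rewrite /actT -map_comp; apply: eq_map => p /=; rewrite mmulA. Qed.

Lemma actT1 x : actT 1 x = x.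
Proof. by rewrite /actT; elim: x => //= [[n c] x ->]; rewrite mmul1. Qed.

Lemma mulA' : associative (mulU (@cat (nat * M))).
Proof. exact: mulUA (@catA _). Qed.

Lemma act_mul m u v : act m (u ** v) = act m u ** act m v.
Proof. rewrite /act; exact: (imUM (actT_cat m)). Qed.

Lemma act_comp a b u : act a (act b u) = act (a * b) u.
Proof. by rewrite /act imU_comp; apply: uf_ext => A; rewrite !imUE; apply: ufS => x; rewrite actT_comp. Qed.

Lemma act1 u : act 1 u = u.
Proof. rewrite /act; exact: (imU_id _ actT1). Qed.

Lemma act_idem m u : idem (@cat _) u -> idem (@cat _) (act m u).
Proof. rewrite /act; exact: (imU_idem (actT_cat m)). Qed.

Lemma act_le m u v : le (@cat _) u v -> le (@cat _) (act m u) (act m v).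
Proof. rewrite /act; exact: (imU_le (actT_cat m)). Qed.

Lemma act_cont m : contmap (act m) (fun A x => A (actT m x)).
Proof. rewrite /act; exact: (im_cont (actT m)). Qed.

Lemma actE m u A : act m u A = u (fun x => A (actT m x)). Proof. by []. Qed.

Definition maxi (x : wordT) := foldr maxn 0 (map fst x).

Lemma maxiP x p : p \in x -> p.1 <= maxi x.
Proof.
elim: x => //= q x IH; rewrite inE => /orP [/eqP ->|/IH h].
  exact: leq_maxl.
exact: leq_trans h (leq_maxr _ _).
Qed.

Definition W (N : nat) (x : wordT) : Prop :=
  [/\ x != [::], sorted ltn (map fst x) & all (fun p => N <= p.1) x].

Lemma sorted_cat_lt (s1 s2 : seq nat) :
  sorted ltn s1 -> sorted ltn s2 -> (forall a b, a \in s1 -> b \in s2 -> a < b) ->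
  sorted ltn (s1 ++ s2).
Proof.
rewrite !(sorted_pairwise ltn_trans) pairwise_cat => -> -> h; rewrite !andbT.
by apply/allrelP => a b; apply: h.
Qed.

Lemma W_cat N x y : W N x -> W (maxi x).+1 y -> W N (x ++ y).
Proof.
move=> [x0 sx ax] [_ sy ay]; split.
- by move: x0; case: (x).
- rewrite map_cat; apply: sorted_cat_lt => // a b /mapP [p px ->] /mapP [q qy ->].
  by apply: leq_ltn_trans (maxiP px) _; move/allP: ay; apply.
- rewrite all_cat ax /=; apply/allP => q qy; move/allP: ay => /(_ q qy).
  apply: leq_trans; move: x0 ax; case: (x) => // p x' _ /allP /(_ p (mem_head _ _)) h.
  by apply: leq_trans h _; apply: leq_trans (maxiP (mem_head p x')) _.
Qed.

Lemma W_act N m x : W N (actT m x) <-> W N x.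
Proof.
rewrite /W /actT -map_comp /= all_map; split => -[x0 s a]; split => //.
- by move: x0; case: (x).
- by move: x0; case: (x).
Qed.

Definition gam (u : uT) := forall N, u (W N).

Lemma gam_mul u v : gam u -> gam v -> gam (u ** v).
Proof.
move=> gu gv N; rewrite mulUE; apply: ufS (gu N) => x Wx.
by apply: ufS (gv (maxi x).+1) => y Wy; apply: W_cat.
Qed.

Lemma gam_act m u : gam u -> gam (act m u).
Proof. by move=> gu N; rewrite actE; apply: ufS (gu N) => x /W_act. Qed.

Lemma closed_gam : closed gam.
Proof. exact: (@closed_inter _ nat (fun N u => u (W N)) (fun N => closed_mem (A:=W N))). Qed.

Definition D0 (x : wordT) : Prop := has (fun p => p.2 == 1) x.

Lemma D0_mull u v : u D0 -> (u ** v) D0.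
Proof. by move=> uD; rewrite mulUE; apply: ufS uD => x Dx; apply: ufS (ufT v) => y _; rewrite /D0 has_cat Dx. Qed.

Lemma D0_mulr u v : v D0 -> (u ** v) D0.
Proof. by move=> vD; rewrite mulUE; apply: ufS (ufT u) => x _; apply: ufS vD => y Dy; rewrite /D0 has_cat Dy orbT. Qed.

Definition TI (I : {set M}) (x : wordT) : Prop := all (fun p => p.2 \in I) x.

Lemma TI_mul (I : {set M}) u v : u (TI I) -> v (TI I) -> (u ** v) (TI I).
Proof. by move=> uI vI; rewrite mulUE; apply: ufS uI => x hx; apply: ufS vI => y hy; rewrite /TI all_cat hx. Qed.

Lemma TI_act m u : act m u (TI (rideal m)).
Proof.
rewrite actE; apply: ufS (ufT u) => x _; rewrite /TI /actT all_map; apply/allP => p _ /=.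
by apply/ridealP; exists p.2.
Qed.

Lemma TI_sub (I J : {set M}) u : I \subset J -> u (TI I) -> u (TI J).
Proof. by move=> /subsetP IJ; apply: ufS => x /allP h; apply/allP => p /h /IJ. Qed.

Lemma act_fix m (I : {set M}) u : (forall c, c \in I -> m * c = c) -> u (TI I) -> act m u = u.
Proof.
move=> h; apply: imU_fix => x /allP hx; rewrite /actT; elim: x hx => //= [[n c] x IH] hx.
by rewrite h ?IH // => [p px|]; [apply: hx; rewrite inE px orbT | apply: (hx (n, c)); rewrite mem_head].
Qed.

Lemma closed_ext (K K' : uT -> Prop) : (forall u, K u <-> K' u) -> closed K -> closed K'.
Proof. by move=> e cK v hv; apply/e/cK => A hA; apply: hv => u /e /hA. Qed.

Lemma closed_impl (P : Prop) (K : uT -> Prop) : (P -> closed K) -> closed (fun u => P -> K u).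
Proof. by move=> h v hv p; apply: (h p) => A hA; apply: hv => u /(_ p) /hA. Qed.

Lemma closed_act_eq m c : closed (fun x => act m x = c).
Proof.
have h := closed_preim (act_cont m) (K := fun _ => True) (c:=c) (@closedT _).
move=> v hv; have [_ e] : True /\ act m v = c.
  by apply: h => A hA; apply: hv => u hu; apply: hA.
exact: e.
Qed.

Lemma closed_fixr w (K : uT -> Prop) : closed K -> closed (fun x => K x /\ x ** w = x).
Proof. move=> cK; exact: (closed_fix (rho_cont (@cat _) w) cK). Qed.


Notation leU := (le (@cat (nat * M))).
Notation idemU := (idem (@cat (nat * M))).

Lemma closed_eqs (P : M -> Prop) (c : M -> uT) : closed (fun x => forall n, P n -> act n x = c n).
Proof.
have h : forall n, closed (fun x => P n -> act n x = c n).
  by move=> n; apply: closed_impl => _; apply: closed_act_eq.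
exact: (@closed_inter _ M (fun n x => P n -> act n x = c n) h).
Qed.

Lemma leT u v w : leU u v -> leU v w -> leU u w.
Proof. exact: (le_trans (@catA _)). Qed.

Lemma lel u v : leU u v -> u ** v = u. Proof. by case. Qed.
Lemma ler u v : leU u v -> v ** u = u. Proof. by case. Qed.

Lemma init : exists v, [/\ gam v, v D0 & idemU v].
Proof.
pose K := fun u => gam u /\ u D0.
have cK : closed K := closedI closed_gam (closed_mem (A:=D0)).
have [u hu] : exists u : uT, forall A, ((exists N, A = W N) \/ A = D0) -> u A.
  apply: ultra_fip => s sF.
  suff [N0 h] : exists N0, forall N', N0 <= N' -> forall A, lin A s -> A [:: (N', 1)].
    by exists [:: (N0, 1)]; apply: h.
  elim: s sF => [|A s IH] sF; first by exists 0.
  have [|N0 h] := IH; first by move=> B Bs; apply: sF; right.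
  case: (sF A (or_introl erefl)) => [[N ->]|->].
  - exists (maxn N N0) => N' hN' B [<-|Bs].
      by split => //=; rewrite andbT; apply: leq_trans hN'; apply: leq_maxl.
    by apply: h => //; apply: leq_trans hN'; apply: leq_maxr.
  - exists N0 => N' hN' B [<-|Bs]; last exact: h.
    by rewrite /D0 /= eqxx.
have [e [[ge De] ie]] := ellis (@catA _) cK
  (ex_intro _ u (conj (fun N => hu _ (or_introl (ex_intro _ N erefl))) (hu _ (or_intror erefl))))
  (fun x y hx hy => conj (gam_mul hx.1 hy.1) (D0_mull _ hx.2)).
by exists e.
Qed.

Hypothesis HL : XM_linear M.
Hypothesis HR : almost_R_trivial M.

Definition good v := [/\ gam v, v D0 & idemU v].
Definition Pt v t := forall n m', #|rideal n| < t -> leU (act n v) (act (n * m') v).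

Lemma step t v : good v -> Pt v t -> exists v', good v' /\ Pt v' t.+1.
Proof.
move=> [gv Dv iv] Pv.
have idact : forall m, idemU (act m v) := fun m => act_idem m iv.
case: (pselect (exists r : M, #|rideal r| = t)) => [[r rt]|nr]; last first.
  exists v; split => // n m'; rewrite ltnS leq_eqVlt => /orP [/eqP e|lt]; last exact: Pv.
  by exfalso; apply: nr; exists n.
pose N := fun n : M => #|rideal n| < t.
pose R := fun n => rideal n = rideal r.
have N_mul : forall n m', N n -> N (n * m').
  by move=> n m' h; apply: leq_ltn_trans (subset_leq_card (rideal_mulr n m')) h.
have RN : forall n m', R n -> N (n * m') \/ R (n * m').
  move=> n m' Rn; have := subset_leq_card (rideal_mulr n m').
  rewrite Rn rt leq_eqVlt => /orP [/eqP e|lt]; last by left.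
  by right; apply: (card_eq HL); rewrite e rt.
suff : exists v', [/\ good v', (forall n, N n -> act n v' = act n v),
    (forall r1, R r1 -> forall n, N n -> leU (act r1 v') (act n v)) &
    (forall r1 r2, R r1 -> R r2 -> act r1 v' = act r2 v')].
  move=> [v' [gv' Zv' Lev' Eqv']]; exists v'; split => // n m'.
  rewrite ltnS leq_eqVlt => /orP [/eqP e|lt].
  - have Rn : R n by apply: (card_eq HL); rewrite e rt.
    case: (RN n m' Rn) => [Nnm|Rnm].
    + by rewrite (Zv' _ Nnm); apply: Lev'.
    + rewrite (Eqv' _ _ Rnm Rn); apply: le_refl; case: gv' => _ _ i; exact: act_idem.
  - by rewrite Zv' // Zv' //; [apply: Pv | apply: N_mul].
have maxN : (exists n, N n) -> exists n1, N n1 /\ forall n, N n -> leU (act n1 v) (act n v).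
  case=> n0 Nn0.
  case: (arg_maxnP (fun n => #|rideal n|) Nn0) => n1 Nn1 mx.
  exists n1; split => // n Nn.
  have := card_le_sub HL (mx n Nn); rewrite rideal_subE => /ridealP [y ->].
  exact: Pv.
have n1_r : forall n1, N n1 -> exists y, n1 = r * y.
  move=> n1 Nn1; apply/ridealP; rewrite -rideal_subE; apply: (card_lt_sub HL).
  by rewrite rt.
have closedZ : forall (c : M -> uT), closed (fun x => gam x /\ x D0 /\ forall n, N n -> act n x = c n).
  move=> c; apply: closedI; first exact: closed_gam.
  apply: closedI; first exact: (closed_mem (A:=D0)).
  exact: closed_eqs.
have subZ : forall x y, (gam x /\ x D0 /\ forall n, N n -> act n x = act n v) ->
    (gam y /\ y D0 /\ forall n, N n -> act n y = act n v) ->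
    (gam (x ** y) /\ (x ** y) D0 /\ forall n, N n -> act n (x ** y) = act n v).
  move=> x y [gx [Dx hx]] [gy [Dy hy]]; split; first exact: gam_mul.
  split; first exact: D0_mull.
  by move=> n Nn; rewrite act_mul hx // hy //; apply: idact.
case: (pselect (exists r' : M, r' != r /\ R r')) => [[r' [ner' Rr']]|nRZ].
- (* right-zero class *)
  have rz : forall r1, R r1 -> forall x, x * r1 = r1.
    move=> r1 Rr1; case: (eqVneq r1 r) => [->|ne].
      exact (rzero HR ner' Rr').
    by apply: (rzero HR (a := r1) (a' := r)); rewrite 1?eq_sym.
  have Rr : R r by [].
  have fixr : forall r1, R r1 -> forall c, c \in rideal r -> r1 * c = c.
    by move=> r1 Rr1 c /ridealP [x ->]; rewrite mmulA (rz r Rr r1).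
  pose G := fun h => gam h /\ h (TI (rideal r)) /\ forall n, N n -> act n h = act (n * r) v.
  have cG : closed G.
    apply: closedI; first exact: closed_gam.
    apply: closedI; first exact: (closed_mem (A:=TI (rideal r))).
    exact: closed_eqs.
  have sG : subsemi (@cat _) G.
    move=> x y [gx [Tx hx]] [gy [Ty hy]]; split; first exact: gam_mul.
    split; first exact: TI_mul.
    by move=> n Nn; rewrite act_mul hx // hy //; apply: idact.
  have Gr : G (act r v).
    split; first exact: gam_act.
    split; first exact: TI_act.
    by move=> n _; rewrite act_comp.
  have [g0 [Gg0 ig0 leg0]] : exists g0, [/\ G g0, idemU g0 & forall n, N n -> leU g0 (act n v)].
    case: (pselect (exists n, N n)) => [exN|nN]; last first.
      have [g0 [Gg0 ig0]] := ellis (@catA _) cG (ex_intro _ _ Gr) sG.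
      by exists g0; split => // n Nn; exfalso; apply: nN; exists n.
    have [n1 [Nn1 mn1]] := maxN exN.
    have [y ey] := n1_r n1 Nn1.
    pose f := act n1 v.
    have fTI : f (TI (rideal r)).
      apply: TI_sub (TI_act n1 v); rewrite rideal_subE ey; apply/ridealP; by exists y.
    have Gf : forall x, G x -> G (x ** f).
      move=> x [gx [Tx hx]]; split; first by apply: gam_mul => //; apply: gam_act.
      split; first exact: TI_mul.
      move=> n Nn; rewrite act_mul hx // /f act_comp ey mmulA.
      by apply: lel; apply: Pv; apply: N_mul.
    pose S2 := fun h => G h /\ h ** f = h.
    have [z1 [[Gz1 z1f] iz1]] : exists z1, S2 z1 /\ idemU z1.
      apply: (ellis (@catA _) (K:=S2)).
      - exact: closed_fixr cG.
      - exists (act r v ** f); split; first exact: Gf.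
        by rewrite -mulA' (idact n1).
      - move=> x1 x2 [Gx fx] [Gy fy]; split; first exact: sG.
        by rewrite -mulA' fy.
    exists (f ** z1); split.
    - case: Gz1 => gz [Tz hz]; split; first by apply: gam_mul => //; apply: gam_act.
      split; first exact: TI_mul.
      move=> n Nn; rewrite act_mul hz // /f act_comp ey mmulA.
      by apply: ler; apply: Pv; apply: N_mul.
    - by rewrite /idem mulA' -(mulA' f z1 f) z1f -mulA' iz1.
    - move=> n Nn; apply: leT (mn1 n Nn); split.
        by rewrite -mulA' z1f.
      by rewrite mulA' (idact n1).
  have [g [Gg ig leg mg]] := min_idem (@catA _) cG sG Gg0 ig0.
  have [gg [Tg hg]] := Gg.
  pose S3 := fun x => (gam x /\ x D0 /\ forall n, N n -> act n x = act n v) /\ x ** g = x.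
  have [z [[[gz [Dz hz]] zg] iz]] : exists z, S3 z /\ idemU z.
    apply: (ellis (@catA _) (K:=S3)).
    - exact: closed_fixr (closedZ _).
    - exists (v ** g); split; last by rewrite -mulA' ig.
      split; first exact: gam_mul.
      split; first exact: D0_mull.
      by move=> n Nn; rewrite act_mul hg //; apply: lel; apply: Pv.
    - move=> x y [Zx gx] [Zy gy]; split; first exact: subZ.
      by rewrite -mulA' gy.
  have gv' : good (g ** z).
    split; [exact: gam_mul | exact: D0_mulr |].
    by rewrite /idem mulA' -(mulA' g z g) zg -mulA' iz.
  have Zv' : forall n, N n -> act n (g ** z) = act n v.
    by move=> n Nn; rewrite act_mul hg // hz //; apply: ler; apply: Pv.
  have lev'g : leU (g ** z) g.
    by split; [rewrite -mulA' zg | rewrite mulA' ig].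
  have Rg : forall r1, R r1 -> act r1 (g ** z) = g.
    move=> r1 Rr1; apply: mg.
    - split; first by apply: gam_act; case: gv'.
      split; first by apply: TI_sub (TI_act r1 _); rewrite Rr1.
      move=> n Nn; rewrite act_comp Zv'; last exact: N_mul.
      apply: (le_anti (op:=@cat (nat * M))).
      + by have := Pv (n * r1) r (N_mul _ _ Nn); rewrite -mmulA (rz r Rr r1).
      + by have := Pv (n * r) r1 (N_mul _ _ Nn); rewrite -mmulA (rz r1 Rr1 r).
    - by apply: act_idem; case: gv'.
    - by have := act_le r1 lev'g; rewrite (act_fix (fixr r1 Rr1) Tg).
  exists (g ** z); split => //.
  - by move=> r1 Rr1 n Nn; rewrite Rg //; apply: leT leg _; apply: leg0.
  - by move=> r1 r2 R1 R2; rewrite !Rg.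
-
  have Rr : forall r1, R r1 -> r1 = r.
    move=> r1 Rr1; apply: contrapT => ne; apply: nRZ; exists r1; split => //; exact/eqP.
  case: (pselect (exists n, N n)) => [exN|nN]; last first.
    exists v; split => //.
    - by move=> r1 _ n Nn; exfalso; apply: nN; exists n.
    - by move=> r1 r2 /Rr -> /Rr ->.
  have [n1 [Nn1 mn1]] := maxN exN.
  have [y ey] := n1_r n1 Nn1.
  pose w := act y v.
  pose S1 := fun x => (gam x /\ x D0 /\ forall n, N n -> act n x = act n v) /\ x ** w = x.
  have [z [[[gz [Dz hz]] zw] iz]] : exists z, S1 z /\ idemU z.
    apply: (ellis (@catA _) (K:=S1)).
    - exact: closed_fixr (closedZ _).
    - exists (v ** w); split; last by rewrite -mulA' (idact y).
      split; first by apply: gam_mul => //; apply: gam_act.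
      split; first exact: D0_mull.
      by move=> n Nn; rewrite act_mul /w act_comp; apply: lel; apply: Pv.
    - move=> x x' [Zx wx] [Zx' wx']; split; first exact: subZ.
      by rewrite -mulA' wx'.
  exists (w ** z); split.
  - split; [by apply: gam_mul => //; apply: gam_act | exact: D0_mulr |].
    by rewrite /idem mulA' -(mulA' w z w) zw -mulA' iz.
  - by move=> n Nn; rewrite act_mul hz // /w act_comp; apply: ler; apply: Pv.
  - move=> r1 /Rr -> n Nn; apply: leT (mn1 n Nn).
    have : leU (w ** z) w by split; [rewrite -mulA' zw | rewrite mulA' (idact y)].
    by move/(act_le r); rewrite /w act_comp -ey.
  - by move=> r1 r2 /Rr -> /Rr ->.
Qed.

Lemma key : exists u, [/\ gam u, u D0, idemU u & forall m, leU u (act m u)].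
Proof.
have h : forall t, exists v, good v /\ Pt v t.
  elim=> [|t [v [gv Pv]]].
    by have [v [gv Dv iv]] := init; exists v; split.
  exact: (step gv Pv).
have [v [[gv Dv iv] Pv]] := h #|M|.+1.
exists v; split => // m.
have := Pv 1 m; rewrite act1 mmul1; apply.
by rewrite ltnS max_card.
Qed.

End Key.


Lemma u_all (T : Type) (X : eqType) (u : ultra T) (l : seq X) (P : X -> T -> Prop) :
  (forall a, a \in l -> u (P a)) -> u (fun x => forall a, a \in l -> P a x).
Proof.
elim: l => [|a l IH] h; first by apply: ufS (ufT u).
have h' : forall b, b \in l -> u (P b) by move=> b bl; apply: h; rewrite inE bl orbT.
have h2 := ufI (h a (mem_head _ _)) (IH h').
apply: (ufS _ h2) => x [Pa hl] b; rewrite inE => /orP [/eqP ->|/hl] //.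
Qed.

Section GG.
Variable M : finMonoid.
Local Notation "a * b" := (mmul a b).
Local Notation "1" := (mone M).
Notation uT := (ultra (wordT M)).
Notation "u ** v" := (mulU (@cat _) u v) (at level 40, left associativity).
Notation leU := (le (@cat (nat * M))).
Notation idemU := (idem (@cat (nat * M))).
Local Notation D0 := (@D0 M).
Local Notation W := (@W M).

Hypothesis HL : XM_linear M.
Hypothesis HR : almost_R_trivial M.

Variables (r : nat) (c : wordT M -> 'I_r).

Lemma col_ex (u : uT) : exists col, u (fun x => c x = col).
Proof.
apply: contrapT => h.
have : u (fun x => forall i, i \in enum 'I_r -> c x <> i).
  apply: u_all => i _; rewrite ufN => ui; apply: h; by exists i.
by move/uf_ne => [x /(_ (c x))]; rewrite mem_enum; apply.
Qed.

Variable u : uT.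
Hypotheses (gu : gam u) (Du : u D0) (iu : idemU u) (leu : forall m, leU u (act m u)).
Variable col : 'I_r.
Hypothesis ucol : u (fun x => c x = col).

Definition A x := c x = col.

Definition Inv (x : wordT M) (phi : bool) : Prop :=
  if phi then A x /\ forall m, act m u (fun y => A (x ++ y))
  else u (fun y => A (x ++ y)).

Lemma prod_chain m k B : act m u B -> act k u B -> (act m u ** act k u) B.
Proof.
move=> hm hk; case/orP: (chain HL m k) => sub.
- have [y ey] : exists y, m = k * y by apply/ridealP; rewrite -rideal_subE.
  have : leU (act k u) (act m u) by rewrite ey -act_comp; apply: act_le.
  by move/ler ->.
- have [y ey] : exists y, k = m * y by apply/ridealP; rewrite -rideal_subE.
  have : leU (act m u) (act k u) by rewrite ey -act_comp; apply: act_le.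
  by move/lel ->.
Qed.

Lemma inv_step x phi m : Inv x phi -> u (fun w => Inv (x ++ actT m w) (phi || (m == 1))).
Proof.
case: phi => /=.
- move=> [Ax hx].
  have h1 : u (fun w => A (x ++ actT m w)) by exact: (hx m).
  have h2 : u (fun w => forall k, k \in enum M -> act k u (fun y => A ((x ++ actT m w) ++ y))).
    apply: u_all => k _.
    have := prod_chain (m:=m) (k:=k) (B:=fun y => A (x ++ y)) (hx m) (hx k); rewrite mulUE actE.
    move=> h; apply: (ufS _ h) => w h'; apply: (ufS _ h') => y; by rewrite catA.
  apply: ufS (ufI h1 h2) => w [a b]; split => // k; apply: b; exact: mem_enum.
- move=> hx; case: (eqVneq m 1) => [->|ne] /=.
  + have h2 : u (fun w => forall k, k \in enum M -> act k u (fun y => A ((x ++ w) ++ y))).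
      apply: u_all => k _; have := leu k; move/lel => e.
      move: hx; rewrite -{1}e mulUE => h; apply: (ufS _ h) => w h'.
      by apply: (ufS _ h') => y; rewrite catA.
    apply: ufS (ufI hx h2) => w [a b]; rewrite actT1; split => // k; apply: b; exact: mem_enum.
  + have := leu m; move/ler => e.
    move: hx; rewrite -{1}e mulUE => h.
    have h0 : u (fun w => u (fun y => A (x ++ (actT m w ++ y)))) := h.
    apply: (ufS _ h0) => w h'.
    by apply: (ufS _ h') => y; rewrite catA.
Qed.

Definition Spec (P : seq (wordT M * bool)) (N : nat) (w : wordT M) : Prop :=
  [/\ W N w, D0 w & forall q, q \in P -> forall m, Inv (q.1 ++ actT m w) (q.2 || (m == 1))].

Lemma spec_ex P N : (forall q, q \in P -> Inv q.1 q.2) -> exists w, Spec P N w.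
Proof.
move=> hP.
have h : u (fun w => forall q, q \in P -> forall m, m \in enum M ->
    Inv (q.1 ++ actT m w) (q.2 || (m == 1))).
  apply: u_all => q qP; apply: u_all => m _; exact: inv_step (hP q qP).
have [w [[WN Dw] hw]] := uf_ne (ufI (ufI (gu N) Du) h).
by exists w; split => // q qP m; apply: hw => //; rewrite mem_enum.
Qed.

Definition choose_w P N : wordT M :=
  match pselect (exists w, Spec P N w) with
  | left h => proj1_sig (cid h)
  | right _ => [::]
  end.

Lemma choose_wP P N : (exists w, Spec P N w) -> Spec P N (choose_w P N).
Proof. by rewrite /choose_w; case: pselect => // h _; case: (cid h). Qed.

Fixpoint st (n : nat) : seq (wordT M * bool) * nat :=
  if n is n'.+1 then
    let P := (st n').1 in let w := choose_w P (st n').2 in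
    (P ++ [seq (q.1 ++ actT m w, q.2 || (m == 1)) | q <- P, m <- enum M], (maxi w).+1)
  else ([:: ([::], false)], 0).

Definition ww n := choose_w (st n).1 (st n).2.

Lemma st_inv n : forall q, q \in (st n).1 -> Inv q.1 q.2.
Proof.
elim: n => [|n IH] q /=.
  by rewrite inE => /eqP -> /=; move: ucol; apply: ufS.
rewrite mem_cat => /orP [/IH //|/allpairsP [[q' m] [q'P _ ->]] /=].
have [_ _ h] := choose_wP (spec_ex (st n).2 IH).
exact: h.
Qed.

Lemma ww_spec n : Spec (st n).1 (st n).2 (ww n).
Proof. exact: choose_wP (spec_ex _ (@st_inv n)). Qed.

Lemma st_mono n k : n <= k -> (st n).2 <= (st k).2.
Proof.
elim: k => [|k IH]; first by rewrite leqn0 => /eqP ->.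
rewrite leq_eqVlt => /orP [/eqP ->//|/IH h]; apply: leq_trans h _ => /=.
have [[w0 _ aw] _ _] := ww_spec k; rewrite /ww in w0 aw.
move: w0 aw; case: (choose_w _ _) => // p x _ /= /andP [h _].
by apply: leq_trans h _; apply: leq_trans (maxiP (mem_head p x)) _.
Qed.

Lemma ww_sep i j : i < j -> forall p q, p \in ww i -> q \in ww j -> p.1 < q.1.
Proof.
move=> ij p q pi qj.
have [[_ _ aw] _ _] := ww_spec j.
have : (st j).2 <= q.1 by move/allP: aw; apply.
apply: leq_trans; apply: leq_trans (st_mono ij); exact: maxiP.
Qed.

Definition cval (s : seq (nat * M)) : wordT M := flatten (map (fun p => actT p.2 (ww p.1)) s).

Lemma sorted_rcons_lt (s : seq (nat * M)) p :
  sorted ltn (map fst (rcons s p)) -> sorted ltn (map fst s) /\ forall q, q \in s -> q.1 < p.1.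
Proof.
rewrite map_rcons -cats1 !(sorted_pairwise ltn_trans) pairwise_cat => /and3P [h1 h2 _].
split => // q qs; move/allrelP: h1; apply; [exact: map_f | exact: mem_head].
Qed.

Lemma st_combo n (s : seq (nat * M)) : sorted ltn (map fst s) -> all (fun p => p.1 < n) s ->
  (cval s, has (fun p => p.2 == 1) s) \in (st n).1.
Proof.
elim: n s => [|n IH] s.
  by case: s => //= p s _ /andP [].
case/lastP: s => [|s p] ss al.
  by rewrite /= mem_cat; apply/orP; left; apply: (IH [::]).
have [ss' lt] := sorted_rcons_lt ss.
rewrite /= mem_cat; apply/orP.
move: al; rewrite all_rcons => /andP [pn1 _].
case: (ltngtP p.1 n) => [pn|pn|pn].
- left; apply: IH; first exact: ss.
  rewrite all_rcons pn /=; apply/allP => q qs; exact: ltn_trans (lt q qs) pn.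
- by exfalso; move: pn1; rewrite ltnS leqNgt pn.
- right; apply/allpairsP; exists ((cval s, has (fun p => p.2 == 1) s), p.2); split.
  + apply: IH => //; apply/allP => q qs; rewrite -pn; exact: lt.
  + exact: mem_enum.
  + by rewrite /cval map_rcons flatten_rcons has_rcons orbC /= pn.
Qed.

Lemma core_sec : exists w : nat -> wordT M,
  [/\ forall i, W 0 (w i),
      forall i j, i < j -> forall p q, p \in w i -> q \in w j -> p.1 < q.1,
      forall i, D0 (w i) &
      forall s, s != [::] -> sorted ltn (map fst s) -> has (fun p => p.2 == 1) s ->
        c (flatten (map (fun p => actT p.2 (w p.1)) s)) = col].
Proof.
exists ww; split.
- move=> i; have [[w0 sw _] _ _] := ww_spec i; split => //; exact/allP.
- exact: ww_sep.
- by move=> i; have [_ ? _] := ww_spec i.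
- move=> s _ ss hs.
  have := st_combo (n := (maxi s).+1) ss.
  have al : all (fun p => p.1 < (maxi s).+1) s by apply/allP => p ps; rewrite ltnS maxiP.
  move/(_ al); rewrite hs => /st_inv /= [Ax _]; exact: Ax.
Qed.

End GG.

Lemma core (M : finMonoid) : XM_linear M -> almost_R_trivial M ->
  forall r (c : wordT M -> 'I_r), exists w : nat -> wordT M,
  [/\ forall i, W 0 (w i),
      forall i j, i < j -> forall p q, p \in w i -> q \in w j -> p.1 < q.1,
      forall i, D0 (w i) &
      exists col, forall s, s != [::] -> sorted ltn (map fst s) -> has (fun p => p.2 == mone M) s ->
        c (flatten (map (fun p => actT p.2 (w p.1)) s)) = col].
Proof.
move=> HL HR r c.
have [u [gu Du iu leu]] := key HL HR.
have [col ucol] := col_ex c u.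
have [w [h1 h2 h3 h4]] := core_sec HL gu Du leu ucol.
by exists w; split => //; exists col.
Qed.


Section Part1.
Variable M : finMonoid.
Local Notation "a * b" := (mmul a b).
Local Notation "1" := (mone M).
Variables (X : nat -> Type) (act : forall n, M -> X n -> X n) (pt : forall n, X n).
Hypothesis hpt : forall n, is_pointed_Mset (@act n) (pt n).

Definition phi (x : wordT M) : seq (letter X) :=
  map (fun p => existT X p.1 (@act p.1 p.2 (pt p.1))) x.

Lemma phi_fst x : map (@projT1 _ _) (phi x) = map fst x.
Proof. by elim: x => //= p x ->. Qed.

Lemma phi_cat x y : phi (x ++ y) = phi x ++ phi y.
Proof. exact: map_cat. Qed.

Lemma phi_act a x : act_word act a (phi x) = phi (actT a x).
Proof.
elim: x => //= p x ->; congr (_ :: _).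
by have [_ h _] := hpt p.1; rewrite h.
Qed.

Lemma phi_flatten (I : Type) (f : I -> wordT M) (s : seq I) :
  flatten (map (fun p => phi (f p)) s) = phi (flatten (map f s)).
Proof. by elim: s => //= p s ->; rewrite phi_cat. Qed.

Lemma sorted_blocks (w : nat -> wordT M) (s : seq nat) :
  (forall i, sorted ltn (map fst (w i))) ->
  (forall i j, i < j -> forall p q, p \in w i -> q \in w j -> p.1 < q.1) ->
  sorted ltn s -> sorted ltn (map fst (flatten (map w s))).
Proof.
move=> sw sep; rewrite !(sorted_pairwise ltn_trans).
elim: s => //= i s IH /andP [ai ps]; rewrite map_cat pairwise_cat IH // andbT.
rewrite -(sorted_pairwise ltn_trans) sw andbT.
apply/allrelP => a b /mapP [p pw ->] /mapP [q /flattenP [y /mapP [j js ->] qw] ->].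
by apply: (sep i j) => //; move/allP: ai; apply.
Qed.

End Part1.

Lemma part1 (M : finMonoid) : almost_R_trivial M -> XM_linear M -> ramsey_monoid M.
Proof.
move=> HR HL X act pt hpt r c.
have [w [h1 h2 h3 [col hcol]]] := core HL HR (fun x => c (phi act pt x)).
exists (fun i => phi act pt (w i)); split.
- split.
  + move=> i; have [w0 sw _] := h1 i; split.
      by move: w0; case: (w i).
    by rewrite phi_fst.
  + move=> s s0 ss.
    rewrite (phi_flatten act pt w s); split.
      case: s s0 ss => // i s _ _ /=; have [w0 _ _] := h1 i.
      by move: w0; case: (w i).
    rewrite phi_fst; apply: sorted_blocks => // i.
    by have [_ ? _] := h1 i.
- move=> i; have /hasP [p pw /eqP p1] := h3 i.
  case/splitPr: pw => u v.
  exists p.1, (phi act pt u), (phi act pt v).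
  rewrite phi_cat /= p1; have [h _ _] := hpt p.1; by rewrite h.
- exists col => s s0 ss [p ps p1].
  have e : flatten [seq act_word act p.2 (phi act pt (w p.1)) | p <- s] =
           phi act pt (flatten [seq actT p.2 (w p.1) | p <- s]).
    rewrite -(phi_flatten act pt (fun p => actT p.2 (w p.1))).
    by congr flatten; apply: eq_map => q; rewrite phi_act.
  rewrite e; apply: hcol => //; first by apply/eqP.
  by apply/hasP; exists p => //; apply/eqP.
Qed.

Section Part2.
Variable M : finMonoid.
Local Notation "a * b" := (mmul a b).
Local Notation "1" := (mone M).
Local Notation XT := (fun _ : nat => XM_t M).
Local Notation actX := (fun _ : nat => @XM_act M).
Local Notation ptX := (fun _ : nat => XM_pt M).

Lemma XM_act_sub (a : M) (K : XM_t M) : val (XM_act a K) \subset rideal a.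
Proof.
apply/subsetP => y /imsetP [x _ ->]; apply/ridealP; by exists x.
Qed.

Lemma XM_act_pt (a : M) : val (XM_act a (XM_pt M)) = rideal a.
Proof.
apply/setP => y; apply/imsetP/ridealP => [[x /ridealP [z ->] ->]|[z ->]].
  by exists z; rewrite mmul1.
by exists (1 * z); [apply/ridealP; exists z | rewrite mmul1].
Qed.

Lemma filter_cons_true (T : Type) (p : pred T) x s :
  p x -> [seq y <- x :: s | p y] = x :: [seq y <- s | p y].
Proof. by move=> /= ->. Qed.

Lemma head_filter (x rest : seq (letter XT)) (a : M) (K1 K2 : {set M}) :
  K1 = rideal a -> ~~ (K2 \subset K1) -> has_pt_entry ptX x ->
  exists (l : letter XT) (t : seq (letter XT)), [seq l : letter XT <- act_word actX a x ++ rest |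
      (val (projT2 l) == K1) || (val (projT2 l) == K2)] = l :: t /\
    val (projT2 l) = K1.
Proof.
move=> -> nK [n [u [v ->]]].
rewrite /act_word map_cat /= -catA filter_cat.
case E: [seq l <- _ | _] => [|l t].
  rewrite cat0s cat_cons filter_cons_true; first by eexists; eexists; split; [reflexivity | exact: (XM_act_pt a)].
  by apply/orP; left; apply/eqP; exact: (XM_act_pt a).
exists l; eexists; split; first by [].
have : l \in [seq l : letter XT <- map (fun e => existT XT (projT1 e) (XM_act a (projT2 e))) u |
    (val (projT2 l) == rideal a) || (val (projT2 l) == K2)] by rewrite E mem_head.
rewrite mem_filter => /andP [/orP [/eqP //|/eqP e] /mapP [e' _ el]].
exfalso; move: nK; rewrite -e el /=; by rewrite XM_act_sub.
Qed.

Lemma part2 : ~ XM_linear M -> ~ ramsey_prop actX ptX.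
Proof.
move=> nL RP.
have [I [J [hI hJ nIJ nJI]]] : exists I J, [/\ I \in XM M, J \in XM M,
    ~~ (I \subset J) & ~~ (J \subset I)].
  apply: contrapT => h; apply: nL => I J hI hJ; apply/negPn/negP => /norP [a b].
  by apply: h; exists I, J.
case/imsetP: hI => a _ eI; case/imsetP: hJ => b _ eJ.
pose g (x : seq (letter XT)) : bool :=
  if [seq l : letter XT <- x | (val (projT2 l) == I) || (val (projT2 l) == J)] is l :: _
  then val (projT2 l) == I else false.
pose c (x : seq (letter XT)) : 'I_2 := if g x then ord_max else ord0.
have [w [[wW wB] hp [col hcol]]] := RP 2 c.
pose s1 : seq (nat * M) := [:: (0, a); (0.+1, mone M)].
pose s2 : seq (nat * M) := [:: (0, b); (0.+1, mone M)].
have e1 : c (flatten [seq act_word actX p.2 (w p.1) | p <- s1]) = col.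
  by apply: hcol => //; exists (0.+1, mone M) => //; rewrite !inE eqxx orbT.
have e2 : c (flatten [seq act_word actX p.2 (w p.1) | p <- s2]) = col.
  by apply: hcol => //; exists (0.+1, mone M) => //; rewrite !inE eqxx orbT.
have f1 : flatten [seq act_word actX p.2 (w p.1) | p <- s1] =
    act_word actX a (w 0) ++ (act_word actX (mone M) (w 0.+1) ++ [::]) by [].
have f2 : flatten [seq act_word actX p.2 (w p.1) | p <- s2] =
    act_word actX b (w 0) ++ (act_word actX (mone M) (w 0.+1) ++ [::]) by [].
have g1 : g (flatten [seq act_word actX p.2 (w p.1) | p <- s1]).
  rewrite f1 /g.
  have [l [t [-> ->]]] := head_filter (act_word actX (mone M) (w 0.+1) ++ [::]) eI nJI (hp 0).
  exact: eqxx.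
have g2 : ~~ g (flatten [seq act_word actX p.2 (w p.1) | p <- s2]).
  rewrite f2 /g.
  have [l [t [E el]]] := head_filter (act_word actX (mone M) (w 0.+1) ++ [::]) eJ nIJ (hp 0).
  have -> : [seq l : letter XT <- act_word actX b (w 0) ++ (act_word actX (mone M) (w 0.+1) ++ [::]) |
      (val (projT2 l) == I) || (val (projT2 l) == J)] = l :: t.
    by rewrite -E; apply: eq_filter => l'; rewrite orbC.
  rewrite el; apply/negP => /eqP eIJ; move: nIJ; by rewrite eIJ subxx.
move: e1 e2; rewrite /c (negbTE g2) g1 => <- /(congr1 val).
by [].
Qed.

Lemma XM_pointed : is_pointed_Mset (@XM_act M) (XM_pt M).
Proof.
split.
- move=> K; apply: val_inj => /=; apply/setP => y; apply/imsetP/idP => [[x xK ->]|yK].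
    by rewrite mmul1.
  by exists y; rewrite ?mmul1.
- move=> a b K; apply: val_inj => /=; apply/setP => y.
  apply/imsetP/imsetP => [[x /imsetP [z zK ->] ->]|[z zK ->]].
    by exists z; rewrite ?mmulA.
  by exists (b * z); [apply/imsetP; exists z | rewrite mmulA].
- move=> [K hK]; case/imsetP: (hK) => a _ eK; exists a; apply: val_inj.
  by rewrite (XM_act_pt a) /=.
Qed.

End Part2.

Theorem corollary4p5 (M : finMonoid) :
  (almost_R_trivial M -> XM_linear M -> ramsey_monoid M) /\
  (~ XM_linear M ->
     ~ ramsey_prop (X := fun _ : nat => XM_t M)
                   (fun _ => @XM_act M) (fun _ => XM_pt M)) /\
  (almost_R_trivial M -> (ramsey_monoid M <-> XM_linear M)).
Proof.
split; first exact: part1.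
split; first exact: part2.
move=> HR; split; last exact: part1.
move=> RM; apply: contrapT => nL; apply: (part2 nL); apply: RM => n.
exact: XM_pointed.
Qed.
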